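(* Let $L$ be an i--lattice. If ${\rm Con}(L)$ is a Boolean algebra, then ${\rm Con}_{\mathbb{I}}(L)$ is a Boolean subalgebra of ${\rm Con}(L)$.
   Context: An i--lattice is a lattice $L$ with a unary operation $'$ such that $a''=a$ and $a\leq b$ implies $b'\leq a'$ for all $a,b\in L$. ${\rm Con}(L)$ is the lattice of lattice congruences of $L$, and ${\rm Con}_{\mathbb{I}}(L)$ is the set of lattice congruences $\theta$ that also preserve the involution, i.e. $(a,b)\in\theta$ implies $(a',b')\in\theta$ (it is a sublattice of ${\rm Con}(L)$). *)

(* Defs.v *)
From HB Require Import structures.
From mathcomp Require Import all_boot all_order.
From Stdlib Require Import Relations.
Set Implicit Arguments. Unset Strict Implicit. Unset Printing Implicit Defensive.
Import Order.TTheory.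
Local Open Scope order_scope.

Definition is_ilattice_inv {d} {L : latticeType d} (inv : L -> L) : Prop :=
  (forall a : L, inv (inv a) = a) /\ (forall a b : L, a <= b -> inv b <= inv a).

Definition rel_eq {T : Type} (R S : T -> T -> Prop) : Prop :=
  forall a b, R a b <-> S a b.

Definition lattice_congruence {d} {L : latticeType d} (R : L -> L -> Prop) : Prop :=
  equivalence L R /\
  (forall a b c e : L, R a b -> R c e -> R (a `&` c) (b `&` e)) /\
  (forall a b c e : L, R a b -> R c e -> R (a `|` c) (b `|` e)).

Definition inv_congruence {d} {L : latticeType d} (inv : L -> L)
    (R : L -> L -> Prop) : Prop :=
  lattice_congruence R /\ (forall a b : L, R a b -> R (inv a) (inv b)).

Definition con_bot {T : Type} : T -> T -> Prop := fun a b => a = b.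
Definition con_top {T : Type} : T -> T -> Prop := fun _ _ => True.

(* Meet and join in Con(L): intersection, and the transitive closure of the
   union (which is the least congruence containing both). *)
Definition con_meet {T : Type} (R S : T -> T -> Prop) : T -> T -> Prop :=
  fun a b => R a b /\ S a b.
Definition con_join {T : Type} (R S : T -> T -> Prop) : T -> T -> Prop :=
  clos_trans T (fun a b => R a b \/ S a b).

Definition con_complement {T : Type} (R S : T -> T -> Prop) : Prop :=
  rel_eq (con_meet R S) con_bot /\ rel_eq (con_join R S) con_top.

Definition Con_boolean {d} (L : latticeType d) : Prop :=
  (forall R S U : L -> L -> Prop,
      lattice_congruence R -> lattice_congruence S -> lattice_congruence U ->
      rel_eq (con_meet R (con_join S U))
             (con_join (con_meet R S) (con_meet R U))) /\
  (forall R : L -> L -> Prop, lattice_congruence R ->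
      exists S, lattice_congruence S /\ con_complement R S).

Definition ConI_boolean_subalgebra {d} (L : latticeType d) (inv : L -> L) : Prop :=
  inv_congruence inv (@con_bot L) /\
  inv_congruence inv (@con_top L) /\
  (forall R S, inv_congruence inv R -> inv_congruence inv S ->
     inv_congruence inv (con_meet R S)) /\
  (forall R S, inv_congruence inv R -> inv_congruence inv S ->
     inv_congruence inv (con_join R S)) /\
  (forall R S, inv_congruence inv R -> lattice_congruence S ->
     con_complement R S -> inv_congruence inv S).
Arguments ConI_boolean_subalgebra {d} L inv.

(* Main.v *)
Require Import Defs.
From mathcomp Require Import all_boot all_order.
From Stdlib Require Import Relations.
Import Order.TTheory.
Local Open Scope order_scope.

Section H.
Context {d : Order.disp_t} {L : latticeType d}.

Lemma cj_map (R S R' S' : L -> L -> Prop) (g : L -> L) :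
  (forall a b, R a b -> R' (g a) (g b)) -> (forall a b, S a b -> S' (g a) (g b)) ->
  forall a b, con_join R S a b -> con_join R' S' (g a) (g b).
Proof.
move=> HR HS a b; elim=> [x y [H|H]|x y z _ IH1 _ IH2].
- by apply: t_step; left; apply: HR.
- by apply: t_step; right; apply: HS.
- exact: t_trans IH1 IH2.
Qed.

Lemma cj_compat (R S : L -> L -> Prop) (f : L -> L -> L) :
  reflexive L R -> reflexive L S ->
  (forall a b c e, R a b -> R c e -> R (f a c) (f b e)) ->
  (forall a b c e, S a b -> S c e -> S (f a c) (f b e)) ->
  forall a b c e, con_join R S a b -> con_join R S c e ->
    con_join R S (f a c) (f b e).
Proof.
move=> rR rS cR cS a b c e H1 H2.
apply: (t_trans _ _ _ (f b c)).
- apply: (@cj_map R S R S (fun x => f x c)) H1 => x y H; [apply: cR|apply: cS] => //.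
- apply: (@cj_map R S R S (fun x => f b x)) H2 => x y H; [apply: cR|apply: cS] => //.
Qed.

Lemma cj_equiv (R S : L -> L -> Prop) : equivalence L R -> equivalence L S ->
  equivalence L (con_join R S).
Proof.
move=> [rR tR sR] [rS tS sS]; split.
- by move=> x; apply: t_step; left.
- by move=> x y z; apply: t_trans.
- move=> x y; elim=> [a b [H|H]|a b c _ IH1 _ IH2].
  + by apply: t_step; left; apply: sR.
  + by apply: t_step; right; apply: sS.
  + exact: t_trans IH2 IH1.
Qed.

Lemma cj_lc (R S : L -> L -> Prop) : lattice_congruence R -> lattice_congruence S ->
  lattice_congruence (con_join R S).
Proof.
move=> [eR [mR jR]] [eS [mS jS]]; split; first exact: cj_equiv.
have rR := equiv_refl _ _ eR; have rS := equiv_refl _ _ eS.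
by split; apply: cj_compat.
Qed.

Variable inv : L -> L.
Hypothesis Hi : is_ilattice_inv inv.

Lemma invI a b : inv (a `&` b) = inv a `|` inv b.
Proof.
have [ii im] := Hi; apply: le_anti; apply/andP; split; last first.
  by rewrite leUx !im // ?leIl ?leIr.
rewrite -[_ `|` _]ii; apply: (im); rewrite lexI.
apply/andP; split.
  by rewrite -[X in _ <= X](ii a); apply: im; rewrite leUl.
by rewrite -[X in _ <= X](ii b); apply: im; rewrite leUr.
Qed.

Lemma invU a b : inv (a `|` b) = inv a `&` inv b.
Proof.
have [ii im] := Hi; apply: le_anti; apply/andP; split.
  by rewrite lexI !im // ?leUl ?leUr.
rewrite -[_ `&` _]ii; apply: (im); rewrite leUx.
apply/andP; split.
  by rewrite -[X in X <= _](ii a); apply: im; rewrite leIl.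
by rewrite -[X in X <= _](ii b); apply: im; rewrite leIr.
Qed.

End H.

Theorem proposition4p8 (d : Order.disp_t) (L : latticeType d) (inv : L -> L) :
  is_ilattice_inv inv -> Con_boolean L -> ConI_boolean_subalgebra L inv.
Proof.
move=> Hi [Hd Hc]; have [ii im] := Hi.
split; [|split; [|split; [|split]]].
- split; last by move=> a b ->.
  split; first by split; [move=> x| move=> x y z -> | move=> x y ->].
  by split=> a b c e -> ->.
- by do !split.
- move=> R S [[[rR tR sR] [mR jR]] iR] [[[rS tS sS] [mS jS]] iS].
  split; last by move=> a b [] /iR ? /iS.
  split.
    split; [by move=> x; split| |].
    + by move=> x y z [? ?] [? ?]; split; [apply: (tR _ y)|apply: (tS _ y)].
    + by move=> x y [? ?]; split; [apply: sR|apply: sS].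
  by split=> a b c e [? ?] [? ?]; split; auto.
- move=> R S [lR iR] [lS iS]; split; first exact: cj_lc.
  by apply: cj_map.
- move=> R S [lR iR] lS [Cm Cj]; split=> //.
  pose S' := fun a b => S (inv a) (inv b).
  have [[rS tS sS] [mS jS]] := lS.
  have [[rR tR sR] _] := lR.
  have lS' : lattice_congruence S'.
    split; first split.
    + by move=> x; apply: rS.
    + by move=> x y z; apply: tS.
    + by move=> x y; apply: sS.
    split=> a0 b0 c e H1 H2; rewrite /S'.
      by rewrite !(@invI _ _ inv Hi); apply: jS.
    by rewrite !(@invU _ _ inv Hi); apply: mS.
  have J' : forall a b, con_join R S' a b.
    move=> a b; rewrite -(ii a) -(ii b).
    apply: (@cj_map _ _ R S R S' inv).
    + exact: iR.
    + by move=> x y H; rewrite /S' !ii.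
    + by apply/Cj.
  move=> a b Sab.
  have : con_meet S (con_join R S') a b by split.
  move/(proj1 (Hd S R S' lS lR lS' a b)).
  elim=> [x y [[H1 H2]|[H1 H2]]|x y z _ IH1 _ IH2] //.
  + have : con_bot x y by apply/Cm; split.
    by move=> ->; apply: rS.
  + exact: tS IH1 IH2.
Qed.
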